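(* Let $\mu$ be a Borel probability measure on a finite-dimensional real Hilbert space $V$ with compact support $\Omega$, let $A\in\mathrm{hull}(\Omega)$, and let $\eta>0$, $\delta\in(0,1)$. Suppose $A$ is in the $(\eta,\delta)$-interior of $\mu$ and $Y^\star\in V_{\mathcal L}$ minimizes $F_A$ over $V_{\mathcal L}$. Then $\|Y^\star\|\le \frac{1}{\eta}\log\frac{1}{\delta}$.
   Context: $F_A(Y)=\langle Y,A\rangle+\log\int_\Omega e^{-\langle Y,X\rangle}d\mu(X)=\log\int_\Omega e^{-\langle Y,X-A\rangle}d\mu(X)$. $V_{\mathcal L}$ is the linear subspace parallel to the affine hull $\mathrm{aff}(\Omega)$. The $(0,\delta)$-interior of $\mu$ is the set of $A'\in\mathrm{hull}(\Omega)$ such that for every $Y\in V_{\mathcal L}$, $\mu(\{X\in\Omega:\langle X-A',Y\rangle\ge 0\})>\delta$. The $(\eta,\delta)$-interior of $\mu$ is the set of $A\in\mathrm{hull}(\Omega)$ such that every $A'\in\mathrm{aff}(\Omega)$ with $\|A'-A\|<\eta$ lies in the $(0,\delta)$-interior of $\mu$. *)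

(* Defs.v *)
From HB Require Import structures.
From mathcomp Require Import all_boot all_order all_algebra.
From mathcomp Require Import all_classical all_reals all_analysis.
Set Implicit Arguments. Unset Strict Implicit. Unset Printing Implicit Defensive.
Import Order.TTheory GRing.Theory Num.Theory.
Import numFieldNormedType.Exports.
Local Open Scope classical_set_scope.
Local Open Scope ring_scope.

(* The finite-dimensional real Hilbert space V is modelled as R^n = 'rV[R]_n
   with the standard inner product. *)
Definition inner (R : realType) (n : nat) (u v : 'rV[R]_n) : R :=
  \sum_(i < n) u ord0 i * v ord0 i.

Definition hnorm (R : realType) (n : nat) (u : 'rV[R]_n) : R :=
  Num.sqrt (inner u u).

Definition Vmeas (R : realType) (n : nat) : measurableType _ :=
  g_sigma_algebraType (@open 'rV[R]_n).

(* Support of a measure: points all of whose open neighbourhoods have positive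
   measure (the smallest closed set of full measure). *)
Definition msupport (R : realType) (n : nat)
  (mu : {measure set (Vmeas R n) -> \bar R}) : set 'rV[R]_n :=
  [set x | forall U : set 'rV[R]_n, open U -> U x -> (0 < mu U)%E].

Definition hull (R : realType) (n : nat) (S : set 'rV[R]_n) : set 'rV[R]_n :=
  [set x | exists (k : nat) (w : 'I_k -> R) (p : 'I_k -> 'rV[R]_n),
     (forall i, 0 <= w i) /\ \sum_(i < k) w i = 1 /\ (forall i, S (p i)) /\
     x = \sum_(i < k) w i *: p i].

Definition aff (R : realType) (n : nat) (S : set 'rV[R]_n) : set 'rV[R]_n :=
  [set x | exists (k : nat) (w : 'I_k -> R) (p : 'I_k -> 'rV[R]_n),
     \sum_(i < k) w i = 1 /\ (forall i, S (p i)) /\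
     x = \sum_(i < k) w i *: p i].

(* The linear subspace parallel to aff S. *)
Definition VL (R : realType) (n : nat) (S : set 'rV[R]_n) : set 'rV[R]_n :=
  [set y | exists a b, aff S a /\ aff S b /\ y = a - b].

Definition FA (R : realType) (n : nat)
  (mu : {measure set (Vmeas R n) -> \bar R}) (A Y : 'rV[R]_n) : R :=
  ln (fine (\int[mu]_(x in [set: Vmeas R n])
              (expR (- inner Y ((x : 'rV[R]_n) - A)))%:E)).

Definition interior0 (R : realType) (n : nat)
  (mu : {measure set (Vmeas R n) -> \bar R}) (delta : R) : set 'rV[R]_n :=
  [set A' | hull (msupport mu) A' /\
     forall Y, VL (msupport mu) Y ->
       (delta%:E < mu [set X : Vmeas R n | (0 <= inner ((X : 'rV[R]_n) - A') Y)%R])%E].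

Definition interior_eta (R : realType) (n : nat)
  (mu : {measure set (Vmeas R n) -> \bar R}) (eta delta : R) : set 'rV[R]_n :=
  [set A | hull (msupport mu) A /\
     forall A', aff (msupport mu) A' -> hnorm (A' - A) < eta ->
       interior0 mu delta A'].

(* Main.v *)
Set Warnings "-all".
Require Import Defs.
From HB Require Import structures.
From mathcomp Require Import all_boot all_order all_algebra.
From mathcomp Require Import all_classical all_reals all_analysis.
From mathcomp Require Import ring lra.
Import Order.TTheory GRing.Theory Num.Theory.
Import numFieldNormedType.Exports.
Local Open Scope classical_set_scope.
Local Open Scope ring_scope.
Section H.
Variables (R : realType) (n : nat).

Lemma entry_le_norm (x : 'rV[R]_n) i : `|x ord0 i| <= `|x|.
Proof.
rewrite [leRHS]/Num.Def.normr /= mx_normrE; apply/bigmax_geP; right => /=.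
by exists (ord0, i).
Qed.

Lemma coord_open_pre (i : 'I_n) (a b : R) :
  open [set x : 'rV[R]_n | a < x ord0 i < b].
Proof.
rewrite openE => x /andP[ax xb].
apply/nbhs_ballP; exists (Num.min (x ord0 i - a) (b - x ord0 i)) => /=.
  by rewrite lt_min !subr_gt0 ax xb.
move=> y; rewrite -ball_normE /= lt_min => /andP[h1 h2].
have := le_lt_trans (entry_le_norm (x - y) i) h1.
have := le_lt_trans (entry_le_norm (x - y) i) h2.
rewrite !mxE => /ltr_normlP[p1 _] /ltr_normlP[_ p2].
apply/andP; split; lra.
Qed.

Lemma coord_meas (i : 'I_n) :
  measurable_fun setT (fun x : Vmeas R n => (x : 'rV[R]_n) ord0 i).
Proof.
apply: (measurability _ (measurable_realfun.RGenOpens.measurableE R)).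
move=> _ [_ [a [b ->]] <-]; apply: sub_sigma_algebra.
rewrite setTI.
have -> : (fun x : Vmeas R n => (x : 'rV[R]_n) ord0 i) @^-1` `]a, b[%classic =
   [set x : 'rV[R]_n | a < x ord0 i < b].
  by apply/seteqP; split => x /=; rewrite in_itv.
exact: coord_open_pre.
Qed.
End H.
Section Aff.
Variables (R : realType) (n : nat).
Implicit Types S : set 'rV[R]_n.

Lemma aff_comb S x y u : aff S x -> aff S y -> aff S (u *: x + (1 - u) *: y).
Proof.
move=> [k1 [w1 [p1 [s1 [P1 ->]]]]] [k2 [w2 [p2 [s2 [P2 ->]]]]].
exists (k1 + k2)%N.
exists (fun i => match fintype.split i with inl a => u * w1 a | inr b => (1 - u) * w2 b end).
exists (fun i => match fintype.split i with inl a => p1 a | inr b => p2 b end).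
have L (a : 'I_k1) : fintype.split (lshift k2 a) = inl a := unsplitK (inl a).
have Rr (b : 'I_k2) : fintype.split (rshift k1 b) = inr b := unsplitK (inr b).
split; [|split].
- rewrite big_split_ord /=. 
  rewrite (eq_bigr (fun a => u * w1 a)); last by move=> a _; rewrite L.
  rewrite (eq_bigr (fun b => (1 - u) * w2 b)); last by move=> b _; rewrite Rr.
  by rewrite -!mulr_sumr s1 s2 !mulr1 addrC subrK.
- by move=> i; case: (fintype.split i).
- rewrite [RHS]big_split_ord /= !scaler_sumr; congr (_ + _).
    by apply: eq_bigr => a _; rewrite L scalerA.
  by apply: eq_bigr => b _; rewrite Rr scalerA.
Qed.


Lemma aff_shift S x a b t : aff S x -> aff S a -> aff S b ->
  aff S (x + t *: (a - b)).
Proof.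
move=> hx ha hb.
have h1 := aff_comb _ _ _ (t) ha hb.
have h2 := aff_comb _ _ _ (2^-1) hx h1.
have h3 := aff_comb _ _ _ (2) h2 hb.
suff -> : x + t *: (a - b) =
  2 *: (2^-1 *: x + (1 - 2^-1) *: (t *: a + (1 - t) *: b)) + (1 - 2) *: b by [].
apply/rowP => i; rewrite !mxE.
have two0 : (2 : R) != 0 by rewrite pnatr_eq0.
by field.
Qed.

Lemma hull_aff S x : hull S x -> aff S x.
Proof. by move=> [k [w [p [_ [s [P ->]]]]]]; exists k, w, p. Qed.
End Aff.
Section Inner.
Variables (R : realType) (n : nat).
Implicit Types u v w : 'rV[R]_n.

Lemma inner_ge0 v : 0 <= inner v v.
Proof. by apply: sumr_ge0 => i _; rewrite -expr2 sqr_ge0. Qed.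

Lemma inner0l v : inner 0 v = 0.
Proof. by rewrite /inner big1 // => i _; rewrite mxE mul0r. Qed.

Lemma hnorm_sqr v : inner v v = hnorm v ^+ 2.
Proof. by rewrite /hnorm sqr_sqrtr // inner_ge0. Qed.

Lemma hnormZ (c : R) v : hnorm (c *: v) = `|c| * hnorm v.
Proof.
rewrite /hnorm (_ : inner (c *: v) (c *: v) = c ^+ 2 * inner v v).
  by rewrite sqrtrM ?sqr_ge0 // sqrtr_sqr.
rewrite /inner mulr_sumr; apply: eq_bigr => i _; rewrite !mxE; ring.
Qed.

Lemma inner_shift (X A Y : 'rV[R]_n) (t : R) :
  inner (X - (A - t *: Y)) (- Y) = - inner Y (X - A) - t * inner Y Y.
Proof.
rewrite /inner mulr_sumr -sumrN -sumrB; apply: eq_bigr => i _; rewrite !mxE; ring.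
Qed.

Lemma inner_meas (Y A : 'rV[R]_n) :
  measurable_fun setT (fun x : Vmeas R n => inner Y ((x : 'rV[R]_n) - A)).
Proof.
have -> : (fun x : Vmeas R n => inner Y ((x : 'rV[R]_n) - A)) =
  (fun x : Vmeas R n => \sum_(i < n) (Y ord0 i * ((x : 'rV[R]_n) ord0 i - A ord0 i))).
  by apply/funext => x; rewrite /inner; apply: eq_bigr => i _; rewrite !mxE.
apply: measurable_sum => i; apply: measurable_realfun.measurable_funM; first exact: measurable_cst.
apply: measurable_realfun.measurable_funB; [exact: coord_meas | exact: measurable_cst].
Qed.

Lemma f_meas (Y A : 'rV[R]_n) : @measurable_fun _ _ (Vmeas R n) (measurable_realfun.constructive_ereal_extended__canonical__measurable_structure_SigmaRing R) setT
  (fun x : Vmeas R n => (expR (- inner Y ((x : 'rV[R]_n) - A)))%:E).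
Proof.
apply/measurable_realfun.measurable_EFinP; apply: measurableT_comp; first exact: measurable_realfun.measurable_expR.
exact: measurable_realfun.measurable_funN (inner_meas Y A).
Qed.
End Inner.
Section Null.
Variables (R : realType) (n : nat).

Lemma negl_fin (mu : {measure set (Vmeas R n) -> \bar R}) (s : seq (set 'rV[R]_n)) :
  (forall V, V \in s -> open V /\ mu V = 0%E) ->
  mu.-negligible (\bigcup_(V in [set V | V \in s]) V : set (Vmeas R n)).
Proof.
elim: s => [_|V s IH H].
  exists set0; split; [exact: measurable0|exact: measure0|].
  by move=> x [V].
have [oV mV] := H V (mem_head V s).
have hs : mu.-negligible (\bigcup_(W in [set W | W \in s]) W : set (Vmeas R n)).
  by apply: IH => W Ws; apply: H; rewrite in_cons Ws orbT.
have hV : mu.-negligible (V : set (Vmeas R n)).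
  exists V; split => //; apply: sub_sigma_algebra; exact: oV.
have hU := negligibleU hV hs.
apply: (negligibleS _ hU).
by move=> x [W]; rewrite /= in_cons => /orP[/eqP -> Wx|Ws Wx]; [left|right; exists W].
Qed.

Lemma support_bound (mu : probability (Vmeas R n) R) :
  compact (msupport mu) ->
  exists B : R, mu.-negligible
    ([set x : 'rV[R]_n | exists i, B < `|x ord0 i|] : set (Vmeas R n)).
Proof.
move=> cpt.
set Om := msupport mu.
have [M [_ HM]] := compact_bounded cpt.
have HB : forall w, Om w -> `|w| <= M + 1.
  by move=> w Omw; apply: (HM (M + 1)) => //; rewrite ltrDl.
exists (M + 2).
set U := \bigcup_(w in Om) ball w (1 : R).
have oU : open U := bigcup_open (fun w _ => ball_open w 1).
have cN : closed (~` U) := open_closedC oU.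
have negK (k : nat) : mu.-negligible
    ((~` U) `&` closed_ball (0 : 'rV[R]_n) k.+1%:R : set (Vmeas R n)).
  set K := (~` U) `&` closed_ball (0 : 'rV[R]_n) k.+1%:R.
  have cK : compact K.
    apply: bounded_closed_compact; last first.
      by apply: closedI cN _; exact: closed_ball_closed.
    exists k.+1%:R; split; first by rewrite realn.
    move=> r kr x [_]; rewrite closed_ballE // /closed_ball_ /= sub0r normrN => h.
    exact: le_trans h (ltW kr).
  rewrite compact_cover in cK.
  have cov : K `<=` cover [set V : set 'rV[R]_n | open V /\ mu V = 0%E] id.
    move=> x [Nx _].
    have nOm : ~ Om x.
      by move=> Omx; apply: Nx; exists x => //; exact: ballxx.
    have /existsNP [V hV] := nOm.
    move/not_implyP: hV => [oV /not_implyP [Vx h]].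
    exists V => //; split => //.
    by apply/eqP; rewrite eq_le measure_ge0 andbT leNgt; apply/negP.
  have [D' sD' covD] := cK _ _ id (fun V hV => proj1 hV) cov.
  apply: (negligibleS (mu := mu) covD).
  apply: negl_fin => V VD; have := sD' V VD; rewrite inE; exact.
have negN : mu.-negligible (~` U : set (Vmeas R n)).
  apply: (negligibleS _ (negligible_bigcup negK)).
  move=> x Nx; exists (Num.Def.trunc `|x|) => //; split => //.
  rewrite closed_ballE // /closed_ball_ /= sub0r normrN.
  exact: ltW (truncnS_gt _).
apply: (negligibleS _ negN).
move=> x [i hi] [w Omw bw].
move: bw; rewrite -ball_normE /= => bw.
have h1 := le_lt_trans (@entry_le_norm _ _ (w - (x : 'rV[R]_n)) i) bw.
rewrite !mxE in h1.
have h2 := le_trans (@entry_le_norm _ _ w i) (HB w Omw).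
have h3 := ler_normB (w ord0 i) (w ord0 i - x ord0 i).
rewrite (_ : w ord0 i - (w ord0 i - x ord0 i) = x ord0 i) in h3; last by ring.
lra.
Qed.

Lemma int_upper (mu : probability (Vmeas R n) R) (B : R) (Y A : 'rV[R]_n) :
  mu.-negligible ([set x : 'rV[R]_n | exists i, B < `|x ord0 i|] : set (Vmeas R n)) ->
  (\int[mu]_(x in [set: Vmeas R n]) (expR (- inner Y ((x : 'rV[R]_n) - A)))%:E
     <= (expR (\sum_(i < n) `|Y ord0 i| * (B + `|A ord0 i|)))%:E)%E.
Proof.
move=> hN.
set C := expR _.
apply: le_trans (_ : (\int[mu]_(x in [set: Vmeas R n]) (cst C%:E x) <= _)%E); last first.
  have P1 : mu [set: Vmeas R n] = 1%E := probability_setT mu.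
  rewrite integral_cst //; set X := (X in (_ * X)%E); rewrite (_ : X = 1%E) ?mule1 //; exact: P1.
apply: ae_ge0_le_integral => //.
- exact: f_meas.
- by move=> x _; rewrite lee_fin expR_ge0.
apply: (negligibleS _ hN).
move=> x /= hx; apply: contrapT => hne; apply: hx => _.
have hb : forall i, `|(x : 'rV[R]_n) ord0 i| <= B.
  move=> i; rewrite leNgt; apply/negP => hi; apply: hne; exists i; exact: hi.
rewrite lee_fin ler_expR /inner -sumrN; apply: ler_sum => i _; rewrite !mxE.
apply: le_trans (ler_norm _) _; rewrite normrN normrM; apply: ler_wpM2l => //.
apply: le_trans (ler_normB _ _) _; rewrite lerD2r; exact: hb.
Qed.

Lemma int_lower (mu : probability (Vmeas R n) R) (Y A : 'rV[R]_n) (S : set (Vmeas R n)) (c : R) :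
  measurable S -> (forall x, S x -> c <= - inner Y ((x : 'rV[R]_n) - A)) ->
  ((expR c)%:E * mu S <=
   \int[mu]_(x in [set: Vmeas R n]) (expR (- inner Y ((x : 'rV[R]_n) - A)))%:E)%E.
Proof.
move=> mS hS.
rewrite -integral_cst //.
apply: le_trans (_ : (\int[mu]_(x in S) (expR (- inner Y ((x : 'rV[R]_n) - A)))%:E <= _)%E).
  apply: ge0_le_integral => //.
  all: try (by move=> x _; rewrite lee_fin expR_ge0).
  all: try (by move=> x Sx; rewrite lee_fin ler_expR; exact: hS).
  all: try exact: measurable_cst.
  exact: (measurable_funS measurableT (fun _ _ => I) (f_meas _ _ Y A)).
apply: ge0_subset_integral => //.
all: try (by move=> x _; rewrite lee_fin expR_ge0).
exact: f_meas.
Qed.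
End Null.

Theorem mainTheorem3 (R : realType) (n : nat)
  (mu : probability (Vmeas R n) R) (A Ystar : 'rV[R]_n) (eta delta : R) :
  @compact 'rV[R]_n (msupport mu) ->
  hull (msupport mu) A ->
  0 < eta -> 0 < delta < 1 ->
  interior_eta mu eta delta A ->
  VL (msupport mu) Ystar ->
  (forall Y, VL (msupport mu) Y -> FA mu A Ystar <= FA mu A Y) ->
  hnorm Ystar <= eta^-1 * ln (delta^-1).
Proof.
move=> cpt hA eta0 /andP[d0 d1] [_ hint] hY hmin.
set Om := msupport mu.
set L := ln delta^-1.
have L0 : 0 < L by rewrite /L ln_gt0 // invf_gt1.
have lnd : ln delta = - L by rewrite /L lnV ?posrE // opprK.
set r := hnorm Ystar.
have r0 : 0 <= r := sqrtr_ge0 _.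
case: (eqVneq r 0) => [->|rn0].
  by rewrite mulr_ge0 // ?invr_ge0 ltW.
have rpos : 0 < r by rewrite lt_def rn0 r0.
rewrite leNgt; apply/negP => hlt.
have hL : L < eta * r.
  by rewrite -(ltr_pM2l eta0) mulrA divff ?mul1r ?gt_eqF // in hlt.
set s := (eta + L / r) / 2.
have Lr : L / r < eta by rewrite ltr_pdivrMr // mulrC.
have Lr0 : 0 < L / r by rewrite divr_gt0.
have s0 : 0 < s by rewrite /s; lra.
have seta : s < eta by rewrite /s; lra.
have sr : L < s * r.
  have -> : s * r = (eta * r + L / r * r) / 2 by rewrite /s; ring.
  rewrite divfK ?gt_eqF //; lra.
set t := s / r.
have t0 : 0 <= t by rewrite /t divr_ge0 // ltW.
have tr : t * r = s by rewrite /t divfK ?gt_eqF.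
set A' := A - t *: Ystar.
have [a [b [ha [hb hYab]]]] := hY.
have affA : aff Om A := hull_aff _ _ _ _ hA.
have affA' : aff Om A'.
  by rewrite /A' hYab -scaleNr; apply: aff_shift.
have hdist : hnorm (A' - A) < eta.
  have -> : A' - A = (- t) *: Ystar by rewrite /A' scaleNr addrAC subrr add0r.
  by rewrite hnormZ normrN ger0_norm // -/r tr.
have hint0 := hint A' affA' hdist.
have hVLn : VL Om (- Ystar) by exists b, a; rewrite hYab opprB.
have hmu := hint0.2 _ hVLn.
set S := [set X : Vmeas R n | 0 <= inner ((X : 'rV[R]_n) - A') (- Ystar)].
have tY : t * inner Ystar Ystar = s * r.
  by rewrite hnorm_sqr -/r expr2 mulrA tr.
have mS : measurable S.
  have := measurable_realfun.measurable_funN (inner_meas _ _ Ystar A) measurableT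
    (measurable_itv `[s * r, +oo[).
  rewrite setTI; congr measurable; apply/seteqP; split => x /=;
    rewrite in_itv andbT /S /A' /= inner_shift tY; lra.
have hS : forall x, S x -> s * r <= - inner Ystar ((x : 'rV[R]_n) - A).
  by move=> x; rewrite /S /A' /= inner_shift tY; lra.
have low := int_lower _ _ mu Ystar A _ _ mS hS.
have [B hB] := support_bound _ _ mu cpt.
have up := int_upper _ _ mu B Ystar A hB.
set I := (\int[mu]_(x in [set: Vmeas R n]) (expR (- inner Ystar ((x : 'rV[R]_n) - A)))%:E)%E in low up *.
have I0 : (0 <= I)%E by apply: integral_ge0 => x _; rewrite lee_fin expR_ge0.
have finI : I \is a fin_num.
  by rewrite ge0_fin_numE // (le_lt_trans up) // ltry.
have IE : I = (fine I)%:E by rewrite fineK.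
have hI : expR (s * r) * delta <= fine I.
  rewrite -lee_fin -IE EFinM; apply: le_trans low.
  by apply: lee_wpmul2l; [rewrite lee_fin expR_ge0 | exact: ltW].
have F1 : s * r - L <= FA mu A Ystar.
  rewrite /FA -/I.
  have -> : s * r - L = ln (expR (s * r) * delta) by rewrite lnM ?posrE ?expR_gt0 // expRK lnd.
  by rewrite ler_ln ?posrE ?mulr_gt0 ?expR_gt0 // (lt_le_trans _ hI) ?mulr_gt0 ?expR_gt0.
have F0 : FA mu A 0 = 0.
  rewrite /FA.
  under eq_integral => x _ do rewrite inner0l oppr0 expR0.
  have P1 : mu [set: Vmeas R n] = 1%E := probability_setT mu.
  rewrite integral_cst //; set X := (X in (_ * X)%E); rewrite (_ : X = 1%E) ?mule1 //.
  by rewrite /= ln1.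
have hV0 : VL Om 0 by exists A, A; split; [|split] => //; rewrite subrr.
have := hmin 0 hV0; rewrite F0 => hF.
lra.
Qed.
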